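(* Let $\mathcal F_s(\lambda_s)=\sum_{g\ge2}a_g\lambda_s^{2g-2}$ (a formal power series in $\lambda_s$). Under the standing assumptions in the context, $\mathcal F_s$ satisfies $$\theta_{\lambda_s}^2\mathcal F_s+(\theta_{\lambda_s}\mathcal F_s)^2+2\left(1-\frac{2}{3\lambda_s^2}\right)\theta_{\lambda_s}\mathcal F_s+\frac59=0,\qquad \theta_{\lambda_s}=\lambda_s\frac{\partial}{\partial\lambda_s}.$$
   Context: Setting: the polynomial formulation of the BCOV holomorphic anomaly equations on a one-dimensional slice (local coordinate $z$) of the moduli space of a Calabi–Yau threefold. $C_{zzz}$ is the holomorphic Yukawa coupling, assumed nonzero. The genus-$g$ free energies $\mathcal F^{(g)}$ ($g\ge 1$) are polynomials in the generators $S^{zz},S^z,S,K_z$ with coefficients holomorphic in $z$; for $g\ge2$, $\mathcal F^{(g)}$ has weighted degree $3g-3$ (weights $1,2,3,1$) and its term of highest degree in $S^{zz}$ is $a_g\,C_{zzz}^{2g-2}(S^{zz})^{3g-3}$, $a_g\in\mathbb Q$. The total free energy is $\mathcal F=\sum_{g\ge2}\lambda^{2g-2}\mathcal F^{(g)}$, with $\lambda$ the topological string coupling. The scaling limit: replace $S^{zz}$ by $\varepsilon^{2/3}S^{zz}$ and $\lambda$ by $\lambda/\varepsilon$ and let $\varepsilon\to0$; only the terms $a_gC_{zzz}^{2g-2}(S^{zz})^{3g-3}\lambda^{2g-2}$ survive, giving $\mathcal F_s=\sum_{g\ge2}a_g\lambda_s^{2g-2}$ with rescaled coupling $\lambda_s^2=\lambda^2C_{zzz}^2(S^{zz})^3$.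 ''l.o.t.'' means terms of lower degree in $S^{zz}$. $D_z$ is a derivation with $D_zS^{zz}=-C_{zzz}(S^{zz})^2+\text{l.o.t.}$ and $D_zC_{zzz}=3C_{zzz}^2S^{zz}+\text{l.o.t.}$; $D_z\mathcal F^{(1)}=\tfrac12C_{zzz}S^{zz}+\text{l.o.t.}$; and for $g\ge2$, $\partial\mathcal F^{(g)}/\partial S^{zz}=\frac12\sum_{h=1}^{g-1}D_z\mathcal F^{(h)}D_z\mathcal F^{(g-h)}+\frac12D_zD_z\mathcal F^{(g-1)}$. *)

(* Defs.v *)
From HB Require Import structures.
From mathcomp Require Import all_boot all_order all_algebra.
Set Implicit Arguments. Unset Strict Implicit. Unset Printing Implicit Defensive.
Import Order.TTheory GRing.Theory Num.Theory.
Local Open Scope ring_scope.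

(* Formal power series in lambda_s with rational coefficients:
   s n is the coefficient of lambda_s^n. *)
Definition fps := nat -> rat.

(* F_s = sum_{g>=2} a_g lambda_s^(2g-2): coefficient of lambda^n is
   a_(n/2+1) when n is even and n >= 2, and 0 otherwise. *)
Definition Fs (a : nat -> rat) : fps :=
  fun n => if odd n || (n < 2)%N then 0 else a (n./2 + 1)%N.

(* theta = lambda d/dlambda acts on lambda^n by multiplication by n. *)
Definition theta (s : fps) : fps := fun n => n%:R * s n.

Definition fps_add (s t : fps) : fps := fun n => s n + t n.
Definition fps_scale (c : rat) (s : fps) : fps := fun n => c * s n.
Definition fps_mul (s t : fps) : fps :=
  fun n => \sum_(i < n.+1) s i * t (n - i)%N.
Definition fps_const (c : rat) : fps := fun n => if n == 0%N then c else 0.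

(* Division by lambda^2 (exact when the coefficients of lambda^0 and
   lambda^1 vanish, which is the case for theta F_s). *)
Definition fps_divX2 (s : fps) : fps := fun n => s n.+2.

Definition ode_lhs (F : fps) : fps :=
  fps_add (theta (theta F))
 (fps_add (fps_mul (theta F) (theta F))
 (fps_add (fps_scale 2 (theta F))
 (fps_add (fps_scale (- (4%:R / 3%:R)) (fps_divX2 (theta F)))
          (fps_const (5%:R / 9%:R))))).

(* Main.v *)
Require Import Defs.
From HB Require Import structures.
From mathcomp Require Import all_boot all_order all_algebra.
From mathcomp Require Import ring lra zify.
Set Implicit Arguments. Unset Strict Implicit. Unset Printing Implicit Defensive.
Import Order.TTheory GRing.Theory Num.Theory.
Local Open Scope ring_scope.

Definition lead (B : comNzRingType) (k : nat) (c : B) (p : {poly B}) :=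
  (size (p - c *: 'X^k)%R <= k)%N.

Lemma lead_coef_k (B : comNzRingType) k c (p : {poly B}) : lead k c p -> p`_k = c.
Proof.
rewrite /lead => H.
have : (p - c *: 'X^k)`_k = 0 by apply: nth_default.
by rewrite coefB coefZ coefXn eqxx mulr1 => /eqP; rewrite subr_eq0 => /eqP.
Qed.

Lemma size_small (B : comNzRingType) k (q : {poly B}) : (size q <= k)%N ->
  forall c, lead k c (c *: 'X^k + q).
Proof. by move=> H c; rewrite /lead (_ : c *: 'X^k + q - c *: 'X^k = q) //; ring. Qed.

Lemma lead_add (B : comNzRingType) k c1 c2 (p q : {poly B}) c :
  lead k c1 p -> lead k c2 q -> c = c1 + c2 -> lead k c (p + q).
Proof.
rewrite /lead => H1 H2 ->.
have -> : p + q - (c1 + c2) *: 'X^k = (p - c1 *: 'X^k) + (q - c2 *: 'X^k).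
  by rewrite scalerDl; ring.
by apply: leq_trans (size_polyD _ _) _; rewrite geq_max H1 H2.
Qed.

Lemma lead_addsmall (B : comNzRingType) k c (p q : {poly B}) :
  lead k c p -> (size q <= k)%N -> lead k c (p + q).
Proof.
rewrite /lead => H1 H2.
have -> : p + q - c *: 'X^k = (p - c *: 'X^k) + q by ring.
by apply: leq_trans (size_polyD _ _) _; rewrite geq_max H1 H2.
Qed.

Lemma size_lead (B : comNzRingType) k c (p : {poly B}) : lead k c p -> (size p <= k.+1)%N.
Proof.
rewrite /lead => H.
have -> : p = (p - c *: 'X^k) + c *: 'X^k by ring.
apply: leq_trans (size_polyD _ _) _; rewrite geq_max (leq_trans H) //.
by rewrite (leq_trans (size_scale_leq _ _)) // size_polyXn.
Qed.

Lemma lead_mul (B : comNzRingType) k1 k2 k c1 c2 c (p q : {poly B}) :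
  lead k1 c1 p -> lead k2 c2 q -> k = (k1 + k2)%N -> c = c1 * c2 -> lead k c (p * q).
Proof.
rewrite /lead => H1 H2 -> ->.
set L1 := p - c1 *: 'X^k1. set L2 := q - c2 *: 'X^k2.
have -> : p * q - (c1 * c2) *: 'X^(k1 + k2) =
   (c1 *: 'X^k1) * L2 + L1 * (c2 *: 'X^k2) + L1 * L2.
  rewrite /L1 /L2 exprD -!mul_polyC polyCM; ring.
have hX : forall c k, (size (c *: 'X^k : {poly B})%R <= k.+1)%N.
  by move=> c0 k0; rewrite (leq_trans (size_scale_leq _ _)) // size_polyXn.
have hM : forall (a b : {poly B}) m n, (size a <= m)%N -> (size b <= n)%N ->
    (size (a * b)%R <= (m + n).-1)%N.
  move=> a b m n Ha Hb; apply: leq_trans (size_polyMleq _ _) _.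
  by rewrite -!subn1 leq_sub2r // leq_add.
apply: leq_trans (size_polyD _ _) _; rewrite geq_max; apply/andP; split.
  apply: leq_trans (size_polyD _ _) _; rewrite geq_max; apply/andP; split.
    by apply: leq_trans (hM _ _ _ _ (hX c1 k1) H2) _; rewrite addSn.
  by apply: leq_trans (hM _ _ _ _ H1 (hX c2 k2)) _; rewrite addnS.
apply: leq_trans (hM _ _ _ _ H1 H2) _; exact: leq_pred.
Qed.

Lemma lead_scale (B : comNzRingType) k s c (p : {poly B}) :
  lead k c p -> lead k (s * c) (s *: p).
Proof.
rewrite /lead => H; rewrite -scalerA -scalerBr.
exact: leq_trans (size_scale_leq _ _) H.
Qed.

Lemma lead_deriv (B : comNzRingType) k c c' (p : {poly B}) :
  lead k c p -> c' = c * k%:R -> lead k.-1 c' (p^`()).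
Proof.
rewrite /lead => H ->.
have -> : p^`() - (c * k%:R) *: 'X^(k.-1) = (p - c *: 'X^k)^`().
  by rewrite derivB derivZ derivXn -scaler_nat scalerA.
set L := p - c *: 'X^k.
have [->|nz] := eqVneq L 0; first by rewrite deriv0 size_poly0.
have := lt_size_deriv nz; move: H; rewrite -/L; move: (size L) (size L^`()) => s t; case: k {L nz} => [|k] /=; lia.
Qed.

Lemma lead_sum (B : comNzRingType) k m n (cf : nat -> B) (P : nat -> {poly B}) :
  (forall i, (m <= i < n)%N -> lead k (cf i) (P i)) ->
  lead k (\sum_(m <= i < n) cf i) (\sum_(m <= i < n) P i).
Proof.
move=> H; rewrite (big_nat_cond _ _ _ _ xpredT) [X in lead _ _ X](big_nat_cond _ _ _ _ xpredT).
apply: (big_ind2 (fun c p => lead k c p)).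
- by rewrite /lead scale0r subr0 size_poly0.
- by move=> ? ? ? ? h1 h2; apply: lead_add h1 h2 _.
- by move=> i /andP [Hi _]; apply: H.
Qed.
Lemma posz_unit (B : idomainType) (Hunit : forall n : nat, (n.+1)%:R \is a @GRing.unit B)
  (N : int) : 0 < N -> (N%:~R : B) \is a GRing.unit.
Proof. by case: N => // [[|n]] // _; exact: Hunit. Qed.

Lemma ratr_eq (B : idomainType) (Hunit : forall n : nat, (n.+1)%:R \is a @GRing.unit B)
  (q : rat) (x : B) (N M : int) : 0 < N -> q * N%:~R = M%:~R -> x * N%:~R = M%:~R ->
  x = ratr q.
Proof.
move=> N0 Hq Hx.
have dU := posz_unit Hunit (denq_gt0 q).
have NU := posz_unit Hunit N0.
have hr : ratr q * (denq q)%:~R = (numq q)%:~R :> B by rewrite /ratr mulrVK.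
have hi : numq q * N = M * denq q.
  apply: (@intr_inj rat); rewrite !intrM -Hq.
  have h : (denq q)%:~R != 0 :> rat by rewrite intr_eq0 denq_neq0.
  have hq := divq_num_den q.
  move: hq h; move: ((numq q)%:~R : rat) ((denq q)%:~R : rat) => a b <- h.
  field; exact: h.
apply: (mulIr NU); apply: (mulIr dU).
rewrite Hx mulrAC hr -!intrM hi; by [].
Qed.

Lemma ratr_spec (B : unitRingType) (q : rat) (Hu : ((denq q)%:~R : B) \is a GRing.unit) :
  ratr q * (denq q)%:~R = (numq q)%:~R :> B.
Proof. by rewrite /ratr mulrVK. Qed.

Lemma rat_spec (q : rat) : q * (denq q)%:~R = (numq q)%:~R.
Proof.
have h : (denq q)%:~R != 0 :> rat by rewrite intr_eq0 denq_neq0.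
have hq := divq_num_den q.
move: hq h; move: ((numq q)%:~R : rat) ((denq q)%:~R : rat) => a b hq h.
by rewrite -{1}hq mulrVK // unitfE.
Qed.

Lemma ratrD (B : idomainType) (Hunit : forall n : nat, (n.+1)%:R \is a @GRing.unit B)
  (q1 q2 : rat) : ratr (q1 + q2) = ratr q1 + ratr q2 :> B.
Proof.
symmetry; apply: (@ratr_eq B Hunit _ _ (denq q1 * denq q2) (numq q1 * denq q2 + numq q2 * denq q1)).
- by rewrite mulr_gt0 ?denq_gt0.
- rewrite intrD !intrM -(rat_spec q1) -(rat_spec q2); ring.
- have h1 := ratr_spec (posz_unit Hunit (denq_gt0 q1)).
  have h2 := ratr_spec (posz_unit Hunit (denq_gt0 q2)).
  rewrite intrD !intrM -h1 -h2; ring.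
Qed.

Lemma ratrM (B : idomainType) (Hunit : forall n : nat, (n.+1)%:R \is a @GRing.unit B)
  (q1 q2 : rat) : ratr (q1 * q2) = ratr q1 * ratr q2 :> B.
Proof.
symmetry; apply: (@ratr_eq B Hunit _ _ (denq q1 * denq q2) (numq q1 * numq q2)).
- by rewrite mulr_gt0 ?denq_gt0.
- rewrite !intrM -(rat_spec q1) -(rat_spec q2); ring.
- have h1 := ratr_spec (posz_unit Hunit (denq_gt0 q1)).
  have h2 := ratr_spec (posz_unit Hunit (denq_gt0 q2)).
  rewrite !intrM -h1 -h2; ring.
Qed.

Lemma ratr0 (B : unitRingType) : ratr 0 = 0 :> B.
Proof. by rewrite (ratr_int _ 0). Qed.

Lemma ratrN1 (B : unitRingType) : ratr (-1) = -1 :> B.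
Proof. by rewrite (ratr_int _ (-1)). Qed.

Lemma ratr_inj (B : idomainType) (Hunit : forall n : nat, (n.+1)%:R \is a @GRing.unit B)
  (q1 q2 : rat) : ratr q1 = ratr q2 :> B -> q1 = q2.
Proof.
move=> H.
have H0 : ratr (q1 - q2) = 0 :> B.
  by rewrite ratrD // -mulN1r ratrM // ratrN1 H; ring.
have h1 := ratr_spec (posz_unit Hunit (denq_gt0 (q1 - q2))).
rewrite H0 mul0r in h1.
have hn : numq (q1 - q2) = 0.
  move: h1; case: (numq (q1 - q2)) => [[|n]|n] //= h.
  - by have := Hunit n; rewrite (_ : n.+1%:R = 0) ?unitr0 //; rewrite h.
  - have h' : (- (Negz n))%:~R = 0 :> B by rewrite mulrNz -h oppr0.
    by have := Hunit n; rewrite (_ : n.+1%:R = 0) ?unitr0 //; rewrite -h' NegzE opprK.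
apply/eqP; rewrite -subr_eq0; apply/eqP.
by rewrite -(divq_num_den (q1 - q2)) hn mul0r.
Qed.
Section DSec.
Variable B : idomainType.
Hypothesis Hunit : forall n : nat, (n.+1)%:R \is a @GRing.unit B.
Variable C : B.
Variable D : {poly B} -> {poly B}.
Hypothesis HDadd : forall p q, D (p + q) = D p + D q.
Hypothesis HDmul : forall p q, D (p * q) = D p * q + p * D q.
Hypothesis HDconst : forall b : B, (size (D b%:P)%R <= 2)%N.
Hypothesis HDX : (size (D 'X + C *: 'X^2)%R <= 2)%N.
Hypothesis HDC : (size (D C%:P - (3%:R * C ^+ 2) *: 'X)%R <= 1)%N.

Lemma D0 : D 0 = 0.
Proof. have h := HDadd 0 0; rewrite addr0 in h; by apply: (addrI (D 0)); rewrite addr0 -h. Qed.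

Lemma D1 : D 1 = 0.
Proof. have h := HDmul 1 1; rewrite !mulr1 !mul1r in h; by apply: (addrI (D 1)); rewrite addr0 -h. Qed.

Lemma DN p : D (- p) = - D p.
Proof. by apply: (addrI (D p)); rewrite -HDadd !subrr D0. Qed.

Lemma Dnat n : D n%:R = 0.
Proof. by elim: n => [|n IH]; rewrite ?D0 // -addn1 natrD HDadd IH D1 addr0. Qed.

Lemma Dint z : D z%:~R = 0.
Proof.
case: z => n; first exact: Dnat.
have -> : (Negz n)%:~R = - (n.+1%:R : {poly B}) by rewrite NegzE mulrNz.
by rewrite DN Dnat oppr0.
Qed.

Lemma polyCz (z : int) : ((z%:~R : B)%:P) = z%:~R.
Proof. by rewrite polyCMz polyC1. Qed.

Lemma Dratr q : D (ratr q)%:P = 0.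
Proof.
have h := ratr_spec (posz_unit Hunit (denq_gt0 q)).
have hd : ((denq q)%:~R : B)%:P != 0.
  by rewrite polyC_eq0; apply/negP => /eqP h0; have := posz_unit Hunit (denq_gt0 q); rewrite h0 unitr0.
have : D ((ratr q)%:P * ((denq q)%:~R)%:P) = 0 by rewrite -polyCM h polyCz Dint.
rewrite HDmul polyCz Dint mulr0 addr0 => /eqP; rewrite mulf_eq0 -polyCz (negPf hd) orbF.
by move/eqP.
Qed.

Lemma D_sum m n (P : nat -> {poly B}) : D (\sum_(m <= i < n) P i) = \sum_(m <= i < n) D (P i).
Proof. exact: (big_morph D HDadd D0). Qed.

Lemma size_DXn k : (size (D 'X^k) <= k.+2)%N.
Proof.
have hX : (size (D 'X) <= 3)%N.
  rewrite (_ : D 'X = (D 'X + C *: 'X^2) - C *: 'X^2); last by rewrite addrK.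
  apply: leq_trans (size_polyD _ _) _; rewrite geq_max (leq_trans HDX) //.
  by rewrite size_polyN (leq_trans (size_scale_leq _ _)) // size_polyXn.
elim: k => [|k IH]; first by rewrite expr0 D1 size_poly0.
rewrite exprSr HDmul; apply: leq_trans (size_polyD _ _) _; rewrite geq_max.
apply/andP; split; apply: leq_trans (size_polyMleq _ _) _.
  by rewrite size_polyX addn2 /=; apply: leq_trans IH _.
by rewrite size_polyXn; apply: leq_trans (leq_add (leqnn _) hX) _; rewrite addn3.
Qed.

Lemma size_D p : (size (D p) <= (size p).+1)%N.
Proof.
rewrite -[p in D p]coefK poly_def.
have -> : \sum_(i < size p) p`_i *: 'X^i = \sum_(0 <= i < size p) p`_i *: ('X^i : {poly B}).
  by rewrite big_mkord.
rewrite D_sum (big_nat_cond _ _ _ _ xpredT).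
apply: (@big_ind _ (fun q : {poly B} => (size q <= (size p).+1)%N)).
- by rewrite size_poly0.
- by move=> x y hx hy; apply: leq_trans (size_polyD _ _) _; rewrite geq_max hx hy.
move=> i /andP [/andP [_ hi] _].
rewrite -mul_polyC HDmul; apply: leq_trans (size_polyD _ _) _; rewrite geq_max.
apply/andP; split; apply: leq_trans (size_polyMleq _ _) _.
  have h1 := HDconst p`_i; rewrite size_polyXn; lia.
have h1 := size_polyC_leq1 p`_i; have h2 := size_DXn i; lia.
Qed.

Lemma lead_Xn k : lead k 1 ('X^k : {poly B}).
Proof. by rewrite /lead scale1r subrr size_poly0. Qed.

Lemma lead_C (c : B) : lead 0 c c%:P.
Proof. by rewrite /lead expr0 -mul_polyC mulr1 subrr size_poly0. Qed.

Lemma lead_DX : lead 2 (- C) (D 'X).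
Proof. by rewrite /lead scaleNr opprK. Qed.

Lemma lead_DXn k : lead k.+1 (- (k%:R * C)) (D 'X^k).
Proof.
elim: k => [|k IH]; first by rewrite expr0 D1 /lead mul0r oppr0 scale0r subr0 size_poly0.
rewrite exprSr HDmul.
apply: lead_add.
- apply: (lead_mul IH (lead_Xn 1)); first by rewrite addn1.
  reflexivity.
- apply: (lead_mul (lead_Xn k) lead_DX); first by rewrite addn2.
  reflexivity.
- rewrite -addn1 natrD; ring.
Qed.

Lemma lead_DCm m : lead 1 (3%:R * m%:R * C ^+ m.+1) (D ((C ^+ m)%:P)).
Proof.
elim: m => [|m IH]; first by rewrite expr0 D1 /lead mulr0 mul0r scale0r subr0 size_poly0.
have hC : lead 1 (3%:R * C ^+ 2) (D C%:P) by rewrite /lead expr1.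
rewrite (exprSr C m) polyCM HDmul.
apply: lead_add.
- apply: (lead_mul IH (lead_C C)); first by rewrite addn0.
  reflexivity.
- apply: (lead_mul (lead_C _) hC); first by rewrite add0n.
  reflexivity.
- rewrite -addn1 natrD !exprS; ring.
Qed.

Lemma lead_D q m k p : (k <= 3 * m)%N -> lead k (ratr q * C ^+ m) p ->
  lead k.+1 (ratr (q * (3 * m - k)%:R) * C ^+ m.+1) (D p).
Proof.
move=> hk hl.
set c := ratr q * C ^+ m.
have -> : p = c *: 'X^k + (p - c *: 'X^k) by ring.
rewrite HDadd; apply: lead_addsmall; last first.
  by apply: leq_trans (size_D _) _; exact: hl.
rewrite /c -mul_polyC polyCM !HDmul Dratr mul0r add0r.
apply: lead_add.
- apply: (lead_mul (lead_mul (lead_C _) (lead_DCm m) _ _) (lead_Xn k)); try reflexivity; lia.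
- apply: (lead_mul (lead_mul (lead_C _) (lead_C _) _ _) (lead_DXn k)); try reflexivity; try lia.
- rewrite ratrM // ratr_nat natrB // natrM exprS; ring.
Qed.
End DSec.
Definition dd (a : nat -> rat) (g : nat) : rat :=
  if g == 1%N then 1 / 2%:R else a g * (3 * g - 3)%:R.

Lemma even_sum (f : nat -> rat) m :
  \sum_(i < (2 * m).+1) (if odd i then 0 else f i) = \sum_(l < m.+1) f (2 * l)%N.
Proof.
elim: m => [|m IH]; first by rewrite !big_ord_recr !big_ord0 /=.
rewrite [RHS]big_ord_recr -IH /=.
rewrite (_ : (2 * m.+1).+1 = ((2 * m).+1).+2)%N; last lia.
rewrite big_ord_recr big_ord_recr /=.
rewrite oddM /= addr0; congr (_ + _); congr (f _); lia.
Qed.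

Lemma u_odd a n : odd n -> theta (Fs a) n = 0.
Proof. by rewrite /theta /Fs => ->; rewrite mulr0. Qed.

Lemma u0 a : theta (Fs a) 0 = 0.
Proof. by rewrite /theta mul0r. Qed.

Lemma u_even a l : theta (Fs a) (2 * l.+1) = 2%:R / 3%:R * dd a l.+2.
Proof.
rewrite /theta /Fs /dd oddM /=.
have -> : (2 * l.+1 < 2)%N = false by lia.
have -> : ((2 * l.+1)./2 + 1 = l.+2)%N by rewrite mul2n doubleK; lia.
have -> : (3 * l.+2 - 3 = 3 * l.+1)%N by lia.
rewrite !natrM; field.
all: by [].
Qed.

Lemma ode_rat (a : nat -> rat)
  (REC : forall g, (2 <= g)%N -> dd a g =
     1 / 2%:R * (\sum_(1 <= h < g) dd a h * dd a (g - h)%N)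
     + 1 / 2%:R * (dd a g.-1 * (3 * g - 4)%:R)) :
  forall n, ode_lhs (Fs a) n = 0.
Proof.
have dd1 : dd a 1 = 1 / 2%:R by [].
move=> n; rewrite /ode_lhs /fps_add /fps_mul /fps_scale /fps_divX2 /fps_const.
rewrite [theta (theta _) n]/theta.
have Hu_odd := u_odd a; have Hu0 := u0 a; have Hu_even := u_even a.
set u := theta (Fs a) in Hu_odd Hu0 Hu_even *.
case hn: (odd n).
  have ho2 : odd n.+2 by rewrite /= hn.
  rewrite (Hu_odd n hn) (Hu_odd n.+2 ho2) big1; last first.
    move=> i _; case: (boolP (odd i)) => hi; first by rewrite Hu_odd // mul0r.
    rewrite (Hu_odd (n - i)%N) ?mulr0 //.
    by rewrite oddB ?(negPf hi) ?addbF // -ltnS ltn_ord.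
  have -> : (n == 0%N) = false by case: n hn {ho2}.
  by rewrite !mulr0 !add0r.
have hj : n = (2 * n./2)%N.
  have := odd_double_half n; rewrite hn -mul2n => h; by rewrite -[LHS]h.
rewrite hj; move: (n./2) => j {hj hn}.
rewrite (eq_bigr (fun i : 'I_(2 * j).+1 => if odd i then 0 else u i * u (2 * j - i)%N)); last first.
  by move=> i _; case: ifP => // ho; rewrite Hu_odd // mul0r.
rewrite (even_sum (fun i => u i * u (2 * j - i)%N)).
case: j => [|k].
  rewrite big_ord1 /= Hu0 !mulr0 !add0r (_ : (2 * 0).+2 = 2 * 1)%N // (Hu_even 0) (REC 2%N) //.
  rewrite big_nat1 (_ : (2 - 1 = 1)%N) // (_ : (2.-1 = 1)%N) // dd1; by field.
rewrite big_ord_recl big_ord_recr /= muln0 Hu0 mul0r add0r.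
rewrite (_ : (2 * k.+1 - 2 * bump 0 k = 0)%N); last by rewrite /bump /=; lia.
rewrite Hu0 mulr0 addr0.
rewrite (eq_bigr (fun i : 'I_k => 4%:R / 9%:R * (dd a i.+2 * dd a (k.+1 - i)%N))); last first.
  move=> i _; have hi := ltn_ord i.
  rewrite /bump /= add1n (Hu_even i).
  rewrite (_ : (2 * k.+1 - 2 * i.+1 = 2 * (k - i.+1).+1)%N); last by lia.
  rewrite (Hu_even (k - i.+1)%N) (_ : ((k - i.+1).+2 = k.+1 - i)%N); last by lia.
  by field.
rewrite -mulr_sumr.
rewrite (_ : (2 * k.+1).+2 = 2 * k.+2)%N; last by lia.
rewrite !Hu_even (Hu_even k.+1).
have hR := REC k.+3 isT.
rewrite big_add1 /= big_mkord big_ord_recl big_ord_recr /= in hR.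
rewrite (eq_bigr (fun i : 'I_k => dd a i.+2 * dd a (k.+1 - i)%N)) in hR; last first.
  move=> i _; have hi := ltn_ord i.
  by rewrite /bump /= add1n (_ : (k.+3 - i.+2 = k.+1 - i)%N) //; lia.
have e0 : bump 0 k = k.+1 by [].
have e1 : (k.+3 - 1 = k.+2)%N by lia.
have e2 : (k.+3 - k.+2 = 1)%N by lia.
have e3 : (3 * k.+3 - 4 = 3 * k + 5)%N by lia.
rewrite e0 e1 e2 e3 dd1 in hR.
rewrite hR.
move: (dd a k.+2) (\sum_(i < k) dd a i.+2 * dd a (k.+1 - i)%N) => X M.
rewrite !natrM !natrD -(natr1 k).
by field.
Qed.


Theorem mainTheorem2
  (B : idomainType)
  (Hunit : forall n : nat, (n.+1)%:R \is a @GRing.unit B)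
  (C : B) (HC : C != 0)
  (D : {poly B} -> {poly B})
  (HDadd : forall p q, D (p + q) = D p + D q)
  (HDmul : forall p q, D (p * q) = D p * q + p * D q)
  (HDconst : forall b : B, (size (D b%:P)%R <= 2)%N)
  (HDX : (size (D 'X + C *: 'X^2)%R <= 2)%N)
  (HDC : (size (D C%:P - (3%:R * C ^+ 2) *: 'X)%R <= 1)%N)
  (F : nat -> {poly B})
  (a : nat -> rat)
  (HF1 : (size (D (F 1%N) - (ratr (1 / 2%:R) * C) *: 'X)%R <= 1)%N)
  (Hlead : forall g : nat, (2 <= g)%N ->
     (size (F g - (ratr (a g) * C ^+ (2 * g - 2)%N) *: 'X^(3 * g - 3)%N)%R
        <= 3 * g - 3)%N)
  (Hanom : forall g : nat, (2 <= g)%N ->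
     (F g)^`() =
       ratr (1 / 2%:R) *: (\sum_(1 <= h < g) D (F h) * D (F (g - h)%N))
       + ratr (1 / 2%:R) *: D (D (F g.-1))) :
  forall n : nat, ode_lhs (Fs a) n = 0.
Proof.
have LD := @lead_D B Hunit C D HDadd HDmul HDconst HDX HDC.
have lead_eq : forall k k' (c c' : B) (p : {poly B}), lead k c p -> k = k' -> c = c' -> lead k' c' p.
  by move=> k k2 c c2 p h <- <-.
have Ld : forall g, (1 <= g)%N -> lead (3 * g - 2) (ratr (dd a g) * C ^+ (2 * g - 1)%N) (D (F g)).
  move=> g hg; case: (eqVneq g 1%N) => [->|g1].
    apply: (lead_eq 1%N _ (ratr (1 / 2%:R) * C)); first exact: HF1.
      by [].
    by rewrite (_ : (2 * 1 - 1 = 1)%N) // expr1.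
  have hg2 : (2 <= g)%N by lia.
  have hl : lead (3 * g - 3) (ratr (a g) * C ^+ (2 * g - 2)%N) (F g) := Hlead g hg2.
  apply: (lead_eq _ _ _ _ _ (LD (a g) (2 * g - 2)%N (3 * g - 3)%N (F g) _ hl)).
  - lia.
  - lia.
  - rewrite /dd (negPf g1); congr (ratr (_ * _%:R) * C ^+ _); lia.
apply: ode_rat => g hg.
have hl : lead (3 * g - 3) (ratr (a g) * C ^+ (2 * g - 2)%N) (F g) := Hlead g hg.
have hL := lead_deriv hl (erefl _).
set e := (2 * g - 2)%N.
have hR : lead (3 * g - 3).-1
   (ratr (1 / 2%:R) * (\sum_(1 <= h < g) ratr (dd a h * dd a (g - h)%N) * C ^+ e)
    + ratr (1 / 2%:R) * (ratr (dd a g.-1 * (3 * g - 4)%N%:R) * C ^+ e))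
   (ratr (1 / 2%:R) *: (\sum_(1 <= h < g) D (F h) * D (F (g - h)%N))
       + ratr (1 / 2%:R) *: D (D (F g.-1))).
  apply: lead_add; [apply: lead_scale | apply: lead_scale | reflexivity].
    apply: lead_sum => h hh.
    apply: (lead_mul (Ld h _) (Ld (g - h)%N _)); try lia.
    rewrite ratrM // (_ : C ^+ e = C ^+ (2 * h - 1)%N * C ^+ (2 * (g - h) - 1)%N); first ring.
    rewrite -exprD; congr (C ^+ _); rewrite /e; lia.
  apply: (lead_eq _ _ _ _ _ (LD (dd a g.-1) (2 * g.-1 - 1)%N (3 * g.-1 - 2)%N (D (F g.-1)) _ (Ld g.-1 _))).
  - lia.
  - lia.
  - lia.
  - congr (ratr (_ * _%:R) * C ^+ _); rewrite /e; lia.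
rewrite (Hanom g hg) in hL.
have E := lead_coef_k hL; rewrite (lead_coef_k hR) -mulr_suml in E.
apply: (ratr_inj Hunit (B := B)).
apply: (mulIf (expf_neq0 e HC)).
have g1 : g != 1%N by lia.
rewrite {1}/dd (negPf g1) (ratrM Hunit (a g)) ratr_nat ratrD //.
rewrite !(ratrM Hunit (1 / 2%:R)).
rewrite (big_morph (ratr : rat -> B) (ratrD Hunit) (ratr0 B)).
rewrite /e; transitivity (ratr (a g) * C ^+ (2 * g - 2)%N * (3 * g - 3)%:R); first ring.
rewrite -E; ring.
Qed.
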